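(* Let $n\ge 2$ and let $g(q)=q^{n}+q^{n-1}a_{n-1}+\dots+qa_1+a_0$ with $a_0,\dots,a_{n-1}\in\mathbb{H}$ and $a_1,\dots,a_{n-1}\neq 0$. Then every zero $q\in\mathbb{H}$ of $g$ satisfies $$|q|\le \max\Big\{\Big|\frac{a_0}{a_1}\Big|,\ 2\Big|\frac{a_1}{a_2}\Big|,\ 2\Big|\frac{a_2}{a_3}\Big|,\ \dots,\ 2\Big|\frac{a_{n-2}}{a_{n-1}}\Big|,\ 2|a_{n-1}|\Big\}.$$
   Context: $\mathbb{H}$ denotes the real quaternions with norm $|q|=\sqrt{q\bar q}$ (Euclidean norm on $\mathbb{R}^4$); $|a/b|$ means $|a|/|b|$. The polynomial $g$ is evaluated at $q\in\mathbb{H}$ by direct substitution, $g(q)=q^n+q^{n-1}a_{n-1}+\dots+qa_1+a_0$ (coefficients to the right of the powers); a zero of $g$ is a $q\in\mathbb{H}$ with $g(q)=0$. *)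

(* Defs.v *)
From HB Require Import structures.
From mathcomp Require Import all_boot all_order all_algebra.
From mathcomp Require Import reals.
Set Implicit Arguments. Unset Strict Implicit. Unset Printing Implicit Defensive.
Import Order.TTheory GRing.Theory Num.Theory.
Local Open Scope ring_scope.

(* Real quaternions  x0 + x1 i + x2 j + x3 k  over a real field R,
   with Hamilton's rules i^2 = j^2 = k^2 = ijk = -1. *)
Record quat (R : realType) := Quat { q0 : R; q1 : R; q2 : R; q3 : R }.

Definition qzero (R : realType) : quat R := Quat 0 0 0 0.
Definition qone (R : realType) : quat R := Quat 1 0 0 0.

Definition qadd (R : realType) (p q : quat R) : quat R :=
  Quat (q0 p + q0 q) (q1 p + q1 q) (q2 p + q2 q) (q3 p + q3 q).

Definition qmul (R : realType) (p q : quat R) : quat R :=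
  Quat (q0 p * q0 q - q1 p * q1 q - q2 p * q2 q - q3 p * q3 q)
       (q0 p * q1 q + q1 p * q0 q + q2 p * q3 q - q3 p * q2 q)
       (q0 p * q2 q - q1 p * q3 q + q2 p * q0 q + q3 p * q1 q)
       (q0 p * q3 q + q1 p * q2 q - q2 p * q1 q + q3 p * q0 q).

Fixpoint qpow (R : realType) (q : quat R) (k : nat) : quat R :=
  match k with
  | 0%N => qone R
  | k'.+1 => qmul (qpow q k') q
  end.

Definition qnorm (R : realType) (q : quat R) : R :=
  Num.sqrt (q0 q ^+ 2 + q1 q ^+ 2 + q2 q ^+ 2 + q3 q ^+ 2).

Definition qpoly_eval (R : realType) (n : nat) (a : nat -> quat R) (q : quat R)
  : quat R :=
  qadd (qpow q n) (\big[@qadd R/qzero R]_(0 <= k < n) qmul (qpow q k) (a k)).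

(* Main.v *)
Require Import Defs.
From HB Require Import structures.
From mathcomp Require Import all_boot all_order all_algebra.
From mathcomp Require Import reals.
From mathcomp Require Import ring lra.
Import Order.TTheory GRing.Theory Num.Theory.
Local Open Scope ring_scope.

Section Q.
Context {R : realType}.
Implicit Types p q : quat R.

Definition qn2 p : R := q0 p ^+ 2 + q1 p ^+ 2 + q2 p ^+ 2 + q3 p ^+ 2.

Lemma qn2_ge0 p : 0 <= qn2 p.
Proof. rewrite /qn2; have := sqr_ge0 (q0 p); have := sqr_ge0 (q1 p);
  have := sqr_ge0 (q2 p); have := sqr_ge0 (q3 p); lra. Qed.

Lemma qnorm_ge0 p : 0 <= qnorm p.
Proof. exact: sqrtr_ge0. Qed.

Lemma qnorm_mul p q : qnorm (qmul p q) = qnorm p * qnorm q.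
Proof.
rewrite /qnorm -sqrtrM; last exact: (qn2_ge0 p).
congr Num.sqrt; case: p => a b c d; case: q => e f g h /=; ring.
Qed.

Lemma qnorm_one : qnorm (qone R) = 1.
Proof. rewrite /qnorm /=. rewrite expr1n !expr0n /= !addr0. exact: sqrtr1. Qed.

Lemma qnorm_pow q k : qnorm (qpow q k) = qnorm q ^+ k.
Proof. elim: k => [|k IH] /=; first by rewrite qnorm_one expr0.
by rewrite qnorm_mul IH exprSr. Qed.

Lemma qnorm_add p q : qnorm (qadd p q) <= qnorm p + qnorm q.
Proof.
case: p => a b c d; case: q => e f g h.
set P := Quat a b c d; set Q := Quat e f g h.
have Hp := qn2_ge0 P; have Hq := qn2_ge0 Q.
set u := qnorm P; set v := qnorm Q.
have u0 : 0 <= u := qnorm_ge0 P. have v0 : 0 <= v := qnorm_ge0 Q.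
have uu : u ^+ 2 = qn2 P by rewrite /u /qnorm sqr_sqrtr.
have vv : v ^+ 2 = qn2 Q by rewrite /v /qnorm sqr_sqrtr.
have H2 : 0 <= (u + v) ^+ 2 by exact: sqr_ge0.
rewrite -[u + v]ger0_norm ?addr_ge0 // -sqrtr_sqr /qnorm ler_sqrt //.
clearbody u v; move: uu vv; rewrite /qn2 /= => uu vv.
set dt := a * e + b * f + c * g + d * h.
have lag : (a^+2+b^+2+c^+2+d^+2)*(e^+2+f^+2+g^+2+h^+2) - dt ^+ 2 =
   (a*f-b*e)^+2 + (a*g-c*e)^+2 + (a*h-d*e)^+2 + (b*g-c*f)^+2 + (b*h-d*f)^+2 + (c*h-d*g)^+2
   by rewrite /dt; ring.
have : dt ^+ 2 <= (u * v) ^+ 2.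
  rewrite exprMn uu vv -subr_ge0 lag.
  by do !apply: addr_ge0; apply: sqr_ge0.
have uv0 : 0 <= u * v by exact: mulr_ge0.
move=> Hd.
have dtle : dt <= u * v by nra.
suff -> : (a + e) ^+ 2 + (b + f) ^+ 2 + (c + g) ^+ 2 + (d + h) ^+ 2 =
   u ^+ 2 + v ^+ 2 + 2 * dt.
  nra.
rewrite uu vv /dt; ring.
Qed.

Lemma qnorm_big (I : Type) (s : seq I) (F : I -> quat R) :
  qnorm (\big[@qadd R/qzero R]_(i <- s) F i) <= \sum_(i <- s) qnorm (F i).
Proof.
elim: s => [|x s IH]; rewrite ?big_nil ?big_cons.
  by rewrite /qnorm /= expr0n /= !addr0 sqrtr0.
apply: le_trans (qnorm_add _ _) _; exact: lerD.
Qed.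

Lemma qnorm_opp p q : qadd p q = qzero R -> qnorm p = qnorm q.
Proof.
case: p => a b c d; case: q => e f g h; rewrite /qadd /qzero /= => -[].
move=> /eqP; rewrite addr_eq0 => /eqP ->.
move=> /eqP; rewrite addr_eq0 => /eqP ->.
move=> /eqP; rewrite addr_eq0 => /eqP ->.
move=> /eqP; rewrite addr_eq0 => /eqP ->.
by rewrite /qnorm /= !sqrrN.
Qed.

Lemma qnorm_gt0 p : p <> qzero R -> 0 < qnorm p.
Proof.
move=> Hp; rewrite lt_neqAle qnorm_ge0 andbT eq_sym /qnorm sqrtr_eq0 -ltNge.
case: p Hp => a b c d Hp.
rewrite ltNge; apply/negP => /= Hle; apply: Hp.
have ha := sqr_ge0 a; have hb := sqr_ge0 b; have hc := sqr_ge0 c; have hd := sqr_ge0 d.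
have ea : a ^+ 2 = 0 by lra. have eb : b ^+ 2 = 0 by lra.
have ec : c ^+ 2 = 0 by lra. have ed : d ^+ 2 = 0 by lra.
move: ea eb ec ed => /eqP; rewrite sqrf_eq0 => /eqP ->.
move=> /eqP; rewrite sqrf_eq0 => /eqP ->.
move=> /eqP; rewrite sqrf_eq0 => /eqP ->.
move=> /eqP; rewrite sqrf_eq0 => /eqP ->.
by [].
Qed.

End Q.

Theorem corollary1 (R : realType) (n : nat) (a : nat -> quat R) (q : quat R) :
  (2 <= n)%N ->
  (forall k : nat, (1 <= k <= n.-1)%N -> a k <> qzero R) ->
  qpoly_eval n a q = qzero R ->
  qnorm q <=
    Num.max
      (Num.max (qnorm (a 0%N) / qnorm (a 1%N))
               (\big[Num.max/0]_(1 <= k < n.-1) (2 * (qnorm (a k) / qnorm (a k.+1)))))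
      (2 * qnorm (a n.-1)).
Proof.
case: n => [|[|m]] // _ /= Hnz Hq.
set M := Num.max _ _.
rewrite leNgt; apply/negP => HM.
set r := qnorm q.
have r0 : 0 <= r := qnorm_ge0 q.
set A := fun k => qnorm (a k).
have A0 k : 0 <= A k by exact: qnorm_ge0.
have Apos k : (1 <= k <= m.+1)%N -> 0 < A k by move=> hk; apply: qnorm_gt0; exact: Hnz.
have Mge : forall x, x <= M -> x < r by move=> x hx; exact: le_lt_trans hx HM.
have h0 : A 0%N / A 1%N < r by apply: Mge; rewrite /M !le_max lexx.
have hlast : 2 * A m.+1 < r by apply: Mge; rewrite /M !le_max lexx orbT.
have hmid : forall j, (1 <= j < m.+1)%N -> 2 * (A j / A j.+1) < r.
  move=> j hj; apply: Mge; rewrite /M le_max; apply/orP; left; rewrite le_max; apply/orP; right.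
  apply: (le_bigmax_seq _ j xpredT (fun k => 2 * (A k / A k.+1))) => //.
  by rewrite mem_index_iota.
have main : r ^+ m.+2 <= \sum_(0 <= k < m.+2) r ^+ k * A k.
  have := @qnorm_opp _ _ _ Hq; rewrite qnorm_pow => ->.
  apply: le_trans (qnorm_big _ _ _) _.
  by apply: ler_sum => k _; rewrite qnorm_mul qnorm_pow.
set b := fun k => r ^+ k * A k.
have tail : forall d j, (j + d = m.+1)%N -> (1 <= j)%N ->
    \sum_(j <= k < m.+2) b k + b j <= r ^+ m.+2.
  elim=> [|d IH] j hjd hj.
    rewrite addn0 in hjd; subst j.
    rewrite big_ltn // big_geq // addr0 /b.
    have : 2 * A m.+1 <= r by exact: ltW.
    rewrite (exprS r m.+1); have := exprn_ge0 m.+1 r0.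
    move: (r ^+ m.+1) => t; nra.
  have hj1 : (j.+1 + d = m.+1)%N by rewrite addSnnS.
  have := IH j.+1 hj1 isT.
  rewrite (big_ltn (m:=j)); last by rewrite ltnS -hjd leq_addr.
  have hjm : (1 <= j < m.+1)%N by rewrite hj /= -hjd addnS ltnS leq_addr.
  have := hmid j hjm.
  have Ap : 0 < A j.+1 by apply: Apos; case/andP: hjm => _ ->.
  move=> hm.
  have e : 2 * A j <= r * A j.+1.
    have -> : 2 * A j = 2 * (A j / A j.+1) * A j.+1 by rewrite -!mulrA mulVf ?mulr1 // gt_eqF.
    by apply: ler_wpM2r; [exact: ltW | exact: ltW].
  have : 2 * b j <= b j.+1.
    have := exprn_ge0 j r0; rewrite /b exprSr; move: (r ^+ j) => t; nra.
  lra.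
have T := tail m 1%N (ltac:(by rewrite add1n)) isT.
move: main; rewrite big_ltn //.
have A1 := Apos 1%N isT.
have : b 0%N < b 1%N.
  rewrite /b expr0 mul1r expr1.
  by rewrite -ltr_pdivrMr.
move=> X Y; move: T X Y; rewrite /b /= => T X Y; move: T X Y; move: (\sum_(1 <= k < m.+2) r ^+ k * A k) (r ^+ 0 * A 0%N) (r ^+ 1 * A 1%N) (r ^+ m.+2) => S x y z; lra.
Qed.
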